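(* Let $n\geq 4$, let $e=[1,2,\dots,n]$ be the identity permutation, and let $\mathcal{S}(e,1)=\{\pi\in S_n: d_K(e,\pi)\leq 1\}$. Then the set $\mathcal{A}=\mathcal{S}(e,1)\cup \mathcal{S}(e,1)\circ(1,2)$ is an optimal anticode of diameter $3$ in $S_n$ with respect to the Kendall's $\tau$-distance, and $|\mathcal{A}|=2(n-1)$.
   Context: $S_n$ denotes the set of all permutations of $[n]=\{1,\dots,n\}$, written $\sigma=[\sigma(1),\dots,\sigma(n)]$. Composition is defined by $(\pi\circ\sigma)(i)=\sigma(\pi(i))$. $(1,2)$ denotes the permutation $[2,1,3,4,\dots,n]$, and for a set $\mathcal{S}\subseteq S_n$ and $\pi\in S_n$, $\mathcal{S}\circ\pi=\{\sigma\circ\pi:\sigma\in\mathcal{S}\}$; thus $\sigma\circ(1,2)$ is obtained from $\sigma$ by exchanging the values $1$ and $2$. An adjacent transposition applied to $\sigma$ exchanges the entries in positions $i$ and $i+1$ for some $1\leq i\leq n-1$. The Kendall's $\tau$-distance $d_K(\sigma,\pi)$ is the minimum number of adjacent transpositions needed to transform $\sigma$ into $\pi$. An anticode of diameter $D$ is a subset $\mathcal{A}\subseteq S_n$ with $d_K(x,y)\leq D$ for all $x,y\in\mathcal{A}$; it is optimal if it has the largest possible size among all anticodes of diameter $D$ in $S_n$. *)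

(* Defs.v *)
(* Permutations of [n] are modelled as 'S_n = {perm 'I_n}
   (values/positions 0..n-1 instead of 1..n).  A permutation s is read as the
   word [s 0, ..., s (n-1)].  MathComp's product (s * t) x = t (s x), which is
   exactly the paper's composition s∘t. *)
From mathcomp Require Import all_boot all_order all_fingroup.
Set Implicit Arguments. Unset Strict Implicit. Unset Printing Implicit Defensive.
Local Open Scope group_scope.

(* t is obtained from s by exchanging the entries in positions i and i+1:
   t(x) = s(tperm i (i+1) x), i.e. t = (i,i+1) ∘ s in the paper's notation. *)
Definition adj_step (n : nat) (s t : 'S_n) : bool :=
  [exists i : 'I_n, exists j : 'I_n,
     (nat_of_ord j == (nat_of_ord i).+1) && (t == tperm i j * s)].

Fixpoint reach (n : nat) (k : nat) (s t : 'S_n) : bool :=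
  match k with
  | 0 => s == t
  | k'.+1 => [exists u : 'S_n, adj_step s u && reach k' u t]
  end.

Definition kendall_le (n : nat) (s t : 'S_n) (D : nat) : bool :=
  [exists k : 'I_D.+1, reach k s t].

Definition kball (n : nat) (r : nat) : {set 'S_n} :=
  [set p : 'S_n | kendall_le 1 p r].

Definition anticode (n : nat) (A : {set 'S_n}) (D : nat) : Prop :=
  forall x y, x \in A -> y \in A -> kendall_le x y D.

Definition optimal_anticode (n : nat) (A : {set 'S_n}) (D : nat) : Prop :=
  anticode A D /\ forall B : {set 'S_n}, anticode B D -> #|B| <= #|A|.

(* Main.v *)
Require Import Defs.
From mathcomp Require Import all_boot all_order all_fingroup.
From mathcomp Require Import zify.
Set Implicit Arguments. Unset Strict Implicit. Unset Printing Implicit Defensive.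

Definition shape (a b1 b2 : nat) :=
  (b2 = b1.+1 /\ (b1.+2 <= a \/ a.+2 <= b1)) \/ (b1 = a /\ b2 = a.+2) \/
  (b1.+1 = a /\ b2 = a.+1).
Definition mem3 (a b1 b2 x1 x2 : nat) := (x1 = a /\ x2 = a.+1) \/ (x1 = b1 /\ x2 = b2).
Definition F (p1 q1 q2 : nat) := if q1 == p1 then q2.-1 else q1.

Ltac dsplit := repeat match goal with H : _ \/ _ |- _ => destruct H | H : _ /\ _ |- _ => destruct H end; try subst; lia.

Lemma star_E n p1 p2 a b1 b2 q1 q2 : p2 = p1.+1 -> shape a b1 b2 -> a.+1 < n -> b2 < n ->
  mem3 a b1 b2 p1 p2 -> mem3 a b1 b2 q1 q2 -> ~ (q1 = p1 /\ q2 = p2) ->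
  F p1 q1 q2 < n.-1 /\ F p1 q1 q2 <> p1.
Proof. rewrite /shape /mem3 /F; case: eqP => ?; intros; dsplit. Qed.

Lemma star_E_inj n p1 p2 a b1 b2 q1 q2 a' b1' b2' q1' q2' : p2 = p1.+1 ->
  shape a b1 b2 -> a.+1 < n -> b2 < n ->
  mem3 a b1 b2 p1 p2 -> mem3 a b1 b2 q1 q2 -> ~ (q1 = p1 /\ q2 = p2) ->
  shape a' b1' b2' -> a'.+1 < n -> b2' < n ->
  mem3 a' b1' b2' p1 p2 -> mem3 a' b1' b2' q1' q2' -> ~ (q1' = p1 /\ q2' = p2) ->
  F p1 q1 q2 = F p1 q1' q2' -> q1 = q1' /\ q2 = q2'.
Proof. rewrite /shape /mem3 /F; case: eqP => ?; case: eqP => ?; intros; dsplit. Qed.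

Lemma star_N n p1 p2 a b1 b2 q1 q2 : 4 <= n -> p2 <> p1.+1 -> shape a b1 b2 -> a.+1 < n -> b2 < n ->
  mem3 a b1 b2 p1 p2 -> mem3 a b1 b2 q1 q2 -> ~ (q1 = p1 /\ q2 = p2) ->
  F p1 q1 q2 < n.-1 /\ F p1 q1 q2 <> (if p1 == 0 then 2 else 0).
Proof. rewrite /shape /mem3 /F; case: eqP => ?; case: eqP => ?; intros; dsplit. Qed.

Lemma star_N_inj n p1 p2 a b1 b2 q1 q2 a' b1' b2' q1' q2' : p2 <> p1.+1 ->
  shape a b1 b2 -> a.+1 < n -> b2 < n ->
  mem3 a b1 b2 p1 p2 -> mem3 a b1 b2 q1 q2 -> ~ (q1 = p1 /\ q2 = p2) ->
  shape a' b1' b2' -> a'.+1 < n -> b2' < n ->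
  mem3 a' b1' b2' p1 p2 -> mem3 a' b1' b2' q1' q2' -> ~ (q1' = p1 /\ q2' = p2) ->
  F p1 q1 q2 = F p1 q1' q2' -> q1 = q1' /\ q2 = q2'.
Proof. rewrite /shape /mem3 /F; case: eqP => ?; case: eqP => ?; intros; dsplit. Qed.

Lemma tri_nat n a b1 b2 a' b1' b2' a'' b1'' b2'' x1 x2 y1 y2 z1 z2 :
  shape a b1 b2 -> a.+1 < n -> b2 < n ->
  shape a' b1' b2' -> a'.+1 < n -> b2' < n ->
  shape a'' b1'' b2'' -> a''.+1 < n -> b2'' < n ->
  mem3 a b1 b2 x1 x2 -> mem3 a' b1' b2' x1 x2 -> ~ mem3 a'' b1'' b2'' x1 x2 ->
  mem3 a b1 b2 y1 y2 -> mem3 a'' b1'' b2'' y1 y2 -> ~ mem3 a' b1' b2' y1 y2 ->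
  mem3 a' b1' b2' z1 z2 -> mem3 a'' b1'' b2'' z1 z2 -> ~ mem3 a b1 b2 z1 z2 ->
  5 <= n.
Proof.
rewrite /mem3 => s1 h1 h1' s2 h2 h2' s3 h3 h3'.
case=> [[? ?]|[? ?]]; subst; case=> [[? ?]|[? ?]] hx; subst;
case=> [[? ?]|[? ?]]; subst; case=> [[? ?]|[? ?]] hy; subst;
case=> [[? ?]|[? ?]]; subst; case=> [[? ?]|[? ?]] hz; subst;
move: s1 s2 s3; rewrite /shape; intros; dsplit.
Qed.

Lemma two2 (T : finType) (J : {set T}) u v :
  #|J| = 2 -> u \in J -> v \in J -> u != v -> J = [set u; v].
Proof.
move=> cJ uJ vJ uv; apply/eqP; rewrite eq_sym eqEcard cards2 uv cJ leqnn andbT.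
by apply/subsetP => x; rewrite !inE => /orP [] /eqP ->.
Qed.

Lemma card3 (T : finType) (a b c : T) : #|[set a; b; c]| <= 3.
Proof.
rewrite -setUA cardsU1 cards2; have := leq_b1 (a \notin [set b; c]).
by case: (b != c); lia.
Qed.

Lemma tri (T : finType) (p0 : T) (K : {set {set T}}) :
  (forall J, J \in K -> #|J| = 2) ->
  (forall J1 J2, J1 \in K -> J2 \in K -> exists t, (t \in J1) && (t \in J2)) ->
  (exists p, forall J, J \in K -> p \in J) \/
  (#|K| <= 3 /\ exists J1 J2 J3, [/\ J1 \in K, J2 \in K, J3 \in K &
      forall t, t \in J1 -> t \in J2 -> t \notin J3]).
Proof.
move=> c2 int.
case: (set_0Vmem K) => [->|[J0 J0K]].
  by left; exists p0 => J; rewrite inE.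
have /cards2P [p [q [pq eJ0]]] : #|J0| == 2 by rewrite c2.
case: (boolP [forall J in K, p \in J]) => [/forall_inP hp|]; first by left; exists p.
case/forall_inPn => J1 J1K pJ1.
case: (boolP [forall J in K, q \in J]) => [/forall_inP hq|]; first by left; exists q.
case/forall_inPn => J2 J2K qJ2.
have qJ1 : q \in J1.
  have [t /andP [tJ0 tJ1]] := int _ _ J0K J1K.
  move: tJ0; rewrite eJ0 !inE => /orP [] /eqP et; last by rewrite -et.
  by rewrite -et tJ1 in pJ1.
have pJ2 : p \in J2.
  have [t /andP [tJ0 tJ2]] := int _ _ J0K J2K.
  move: tJ0; rewrite eJ0 !inE => /orP [] /eqP et; first by rewrite -et.
  by rewrite -et tJ2 in qJ2.
have [r /andP [rJ1 rJ2]] := int _ _ J1K J2K.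
have rp : r != p by apply: contraNneq pJ1 => <-.
have rq : r != q by apply: contraNneq qJ2 => <-.
have eJ1 : J1 = [set q; r] by apply: two2; rewrite ?c2 // eq_sym.
have eJ2 : J2 = [set p; r] by apply: two2; rewrite ?c2 // eq_sym.
right; split; last first.
  exists J0, J1, J2; split => // t.
  rewrite eJ0 eJ1 eJ2 !inE => /orP [] /eqP -> /orP [] /eqP e //.
  - by move: pq; rewrite e eqxx.
  - by move: rp; rewrite -e eqxx.
  - by rewrite negb_or eq_sym pq /= eq_sym rq.
  - by move: rq; rewrite -e eqxx.
apply: leq_trans (card3 J0 J1 J2); apply: subset_leq_card; apply/subsetP => J JK.
have cJ := c2 _ JK; rewrite !inE.
have [t /andP [tJ tJ0]] := int _ _ JK J0K.
move: tJ0; rewrite eJ0 !inE => /orP [] /eqP et; subst t.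
- case qJ: (q \in J).
    by rewrite ?eJ0 (two2 cJ tJ qJ pq) eqxx.
  have [s /andP [sJ sJ1]] := int _ _ JK J1K.
  move: sJ1; rewrite eJ1 !inE => /orP [] /eqP es; subst s; first by rewrite sJ in qJ.
  by rewrite eJ2 (two2 cJ tJ sJ) ?eqxx ?orbT // eq_sym.
- have [s /andP [sJ sJ2]] := int _ _ JK J2K.
  move: sJ2; rewrite eJ2 !inE => /orP [] /eqP es; subst s.
    by rewrite ?eJ0 (two2 cJ sJ tJ pq) eqxx.
  by rewrite eJ1 (two2 cJ tJ sJ) ?eqxx ?orbT // eq_sym.
Qed.

Lemma ord_neq m (a b : 'I_m) : a != b -> nat_of_ord a <> nat_of_ord b.
Proof. by move=> /eqP h e; apply: h; apply: val_inj. Qed.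
Lemma ord_eqE m (a b : 'I_m) : (a == b) = (nat_of_ord a == nat_of_ord b).
Proof. by []. Qed.
Ltac neqv := repeat match goal with H : is_true (?a != ?b) |- _ =>
  have := ord_neq H; clear H end.

Section S.
Variable n : nat.
Implicit Types s t x y : 'S_n.

Definition Iv x : {set 'I_n * 'I_n} :=
  [set q : 'I_n * 'I_n | (q.1 < q.2) && ((x^-1)%g q.2 < (x^-1)%g q.1)].

Definition srt (u v : 'I_n) : 'I_n * 'I_n := if u < v then (u, v) else (v, u).

Lemma Iv1 : Iv 1 = set0.
Proof.
apply/setP => q; rewrite !inE invg1 !perm1; apply/negbTE.
by apply/negP => /andP[a b]; lia.
Qed.

Lemma Iv_step s (i j : 'I_n) : nat_of_ord j = (nat_of_ord i).+1 ->
  forall q, (q \in Iv (tperm i j * s)%g) = (q \in Iv s) (+) (q == srt (s i) (s j)).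
Proof.
move=> hj [u v]; rewrite !inE /= invMg tpermV !permM.
set A := (s^-1)%g u; set B := (s^-1)%g v.
have hu : u = s A by rewrite /A permKV.
have hv : v = s B by rewrite /B permKV.
clearbody A B; rewrite /srt hu hv.
have hij : i != j by apply/eqP => e; move: hj; rewrite e; lia.
have sij : s i != s j by rewrite (inj_eq perm_inj).
case: (ltngtP (s i) (s j)) => hs; try by (move: sij; rewrite -val_eqE /= hs eqxx).
all: rewrite xpair_eqE !(inj_eq perm_inj).
all: case: (eqVneq A i) => [?|nAi]; case: (eqVneq A j) => [?|nAj];
 case: (eqVneq B i) => [?|nBi]; case: (eqVneq B j) => [?|nBj]; subst;
 rewrite ?eqxx ?tpermL ?tpermR ?tpermD //= 1?eq_sym //.
all: try (move: hij; rewrite eqxx //).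
all: try (rewrite ?andbF ?andbT ?addbF ?addbT; lia).
all: try (move: nAi nAj nBi nBj; rewrite -!val_eqE /=; lia).
all: neqv; move: hs hj; lia.
Qed.

Lemma adj_stepP s t : adj_step s t ->
  exists i j : 'I_n, nat_of_ord j = (nat_of_ord i).+1 /\ t = (tperm i j * s)%g.
Proof.
by case/existsP => i /existsP [j /andP [/eqP hj /eqP ->]]; exists i, j.
Qed.

Lemma toggle_odd (X Y : {set 'I_n * 'I_n}) p :
  (forall q, (q \in X) = (q \in Y) (+) (q == p)) -> odd #|X| = ~~ odd #|Y|.
Proof.
move=> h; case pY: (p \in Y).
- have -> : X = Y :\ p by apply/setP => q; rewrite h !inE; case: eqP => [->|]; rewrite ?pY //= ?addbF ?andbT ?addbT.
  by rewrite (cardsD1 p Y) pY /= negbK.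
- have -> : X = p |: Y by apply/setP => q; rewrite h !inE; case: eqP => [->|]; rewrite ?pY //= ?addbF ?addbT.
  by rewrite cardsU1 pY.
Qed.

Lemma step_odd s t : adj_step s t -> odd #|Iv t| = ~~ odd #|Iv s|.
Proof. by case/adj_stepP => i [j [hj ->]]; apply: toggle_odd; apply: Iv_step. Qed.

Lemma reach_par k s t : reach k s t -> odd #|Iv t| = odd k (+) odd #|Iv s|.
Proof.
elim: k s => [|k IH] s /=; first by move/eqP->.
case/existsP => u /andP [su ut]; rewrite (IH _ ut) (step_odd su).
by case: (odd k); case: (odd #|Iv s|).
Qed.

Definition Dset s t := [set q | (q \in Iv s) != (q \in Iv t)].

Lemma reach_dist k s t : reach k s t -> #|Dset s t| <= k.
Proof.
elim: k s => [|k IH] s /=.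
  move/eqP->; rewrite leqn0 cards_eq0; apply/eqP/setP => q; by rewrite !inE eqxx.
case/existsP => u /andP [su ut]; have := IH _ ut.
case/adj_stepP: su => i [j [hj eu]].
have hq := Iv_step s hj; rewrite -eu in hq.
set p := srt (s i) (s j).
have sub : Dset s t \subset p |: Dset u t.
  apply/subsetP => q; rewrite in_setU1 /Dset [q \in finset _]in_set [q \in finset _]in_set hq.
  rewrite -/p; by case: (q =P p) => //= _; rewrite addbF.
move=> hk; apply: leq_trans (subset_leq_card sub) _.
by rewrite cardsU1; have := leq_b1 (p \notin Dset u t); lia.
Qed.

Lemma adj_mulr s t g : adj_step s t -> adj_step (s * g)%g (t * g)%g.
Proof.
case/adj_stepP => i [j [hj ->]]; apply/existsP; exists i; apply/existsP; exists j.
by rewrite hj eqxx mulgA eqxx.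
Qed.

Lemma reach_mulr k s t g : reach k s t -> reach k (s * g)%g (t * g)%g.
Proof.
elim: k s => [|k IH] s /=; first by move/eqP->.
case/existsP => u /andP [su ut]; apply/existsP; exists (u * g)%g.
by rewrite adj_mulr // IH.
Qed.

Lemma adj_sym s t : adj_step s t -> adj_step t s.
Proof.
case/adj_stepP => i [j [hj ->]]; apply/existsP; exists i; apply/existsP; exists j.
by rewrite hj eqxx mulgA tperm2 mul1g eqxx.
Qed.

Lemma reach_cat k l s t w : reach k s t -> reach l t w -> reach (k + l) s w.
Proof.
elim: k s => [|k IH] s /=; first by move/eqP->.
case/existsP => u /andP [su ut] tw; apply/existsP; exists u; rewrite su /=.
exact: IH.
Qed.

Lemma reach1 s t : adj_step s t -> reach 1 s t.
Proof. by move=> h; apply/existsP; exists t; rewrite h /= eqxx. Qed.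

Lemma reach_sym k s t : reach k s t -> reach k t s.
Proof.
elim: k s t => [|k IH] s t; first by rewrite /= eq_sym.
case/existsP => u /andP [su ut]; rewrite -addn1.
apply: reach_cat (IH _ _ ut) _; exact/reach1/adj_sym.
Qed.

Lemma kendallP s t D : reflect (exists2 k, k <= D & reach k s t) (kendall_le s t D).
Proof.
apply: (iffP existsP) => [[k hk]|[k hk r]]; first by exists k => //; rewrite -ltnS.
by exists (Ordinal (hk : k < D.+1)).
Qed.

Lemma card_lt m : m <= n -> #|[set k : 'I_n | k < m]| = m.
Proof.
move=> hm; transitivity #|[set widen_ord hm k | k in 'I_m]|; last first.
  by rewrite card_imset ?card_ord //; by move=> a b /(congr1 val) /= e; apply: val_inj.
apply: eq_card => k; rewrite inE; apply/idP/imsetP => [hk|[k' _ ->]]; last first.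
  by rewrite /= ltn_ord.
by exists (Ordinal hk) => //; apply: val_inj.
Qed.

Lemma rank_eq (r : 'S_n) u : #|[set v | r v < r u]| = r u.
Proof.
have -> : [set v | r v < r u] = r @^-1: [set k : 'I_n | k < r u].
  by apply/setP => v; rewrite !inE.
by rewrite card_preimset ?card_lt //; [apply: ltnW | apply: perm_inj].
Qed.

Lemma Iv_before x u v : u != v ->
  ((x^-1)%g v < (x^-1)%g u) = (if v < u then (v,u) \notin Iv x else (u,v) \in Iv x).
Proof.
move=> uv; rewrite !inE /=.
have h : (x^-1)%g u != (x^-1)%g v by rewrite (inj_eq perm_inj).
move: uv h => /ord_neq uv /ord_neq h.
case: (ltngtP v u) => hvu /=; last by lia.
all: move: hvu h; lia.
Qed.

Lemma Iv_inj x y : Iv x = Iv y -> x = y.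
Proof.
move=> e; apply: invg_inj; apply/permP => u; apply: val_inj => /=.
rewrite -rank_eq -[RHS]rank_eq; apply: eq_card => v; rewrite !inE.
case: (eqVneq u v) => [->|uv]; first by rewrite !ltnn.
by rewrite !Iv_before // e.
Qed.


Lemma reach2_shape x : reach 2 1 x -> x != 1%g ->
  exists a b1 b2, [/\ a.+1 < n, b2 < n, shape a b1 b2 &
   forall q : 'I_n * 'I_n, (q \in Iv x) =
     ((q.1 == a :> nat) && (q.2 == a.+1 :> nat)) || ((q.1 == b1 :> nat) && (q.2 == b2 :> nat))].
Proof.
move=> /existsP [u /andP [/adj_stepP [i [j [hj eu]]] /existsP [w /andP [/adj_stepP [i' [j' [hj' ew]]] /eqP wx]]]] x1.
subst x.
have hx : forall q, (q \in Iv w) = (q == srt i j) (+) (q == srt (u i') (u j')).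
  move=> q; rewrite ew (Iv_step _ hj') eu (Iv_step _ hj) Iv1 inE.
  by rewrite !perm1.
have tv : forall y : 'I_n, nat_of_ord (u y) = if nat_of_ord y == nat_of_ord i then nat_of_ord j else if nat_of_ord y == nat_of_ord j then nat_of_ord i else nat_of_ord y.
  move=> y; rewrite eu permM perm1.
  case: (eqVneq y i) => [->|yi]; first by rewrite tpermL eqxx.
  case: (eqVneq y j) => [->|yj]; first by rewrite tpermR eqxx hj; rewrite ifN //; apply/eqP; lia.
  rewrite tpermD; [|by rewrite eq_sym|by rewrite eq_sym]; move: yi yj => /ord_neq yi /ord_neq yj.
  have h1 : (nat_of_ord y == nat_of_ord i :> nat) = false by apply/eqP.
  have h2 : (nat_of_ord y == nat_of_ord j :> nat) = false by apply/eqP.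
  by rewrite h1 h2.
set Q := srt (u i') (u j').
have hP : srt i j = (i, j) by rewrite /srt hj ltnSn.
exists i, Q.1, Q.2.
have hQ : forall q : 'I_n * 'I_n, (q == Q) = (q.1 == Q.1 :> nat) && (q.2 == Q.2 :> nat).
  by case=> q1 q2; case: Q => c d; rewrite xpair_eqE.
have PQ : srt i j != Q.
  apply/negP => /eqP ePQ; have e1 : w = 1%g.
    by apply: Iv_inj; apply/setP => q; rewrite hx -/Q -ePQ addbb Iv1 inE.
  by rewrite e1 eqxx in x1.
have hsh : shape i Q.1 Q.2.
{ move: PQ; rewrite hP /Q /srt.
  have hnj := ltn_ord j'; have hnj' := ltn_ord j.
  case: ifP => hlt; rewrite xpair_eqE -!val_eqE /=; move: hlt; rewrite !tv.
  all: rewrite /shape; have := ltn_ord j; have := ltn_ord j'.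
  all: repeat (case: ifP => [/eqP ?|/negbT /eqP ?]); lia. }
split; [by rewrite -hj ltn_ord|exact: ltn_ord|exact: hsh|].
move=> q; rewrite hx -/Q hP hQ; move: PQ; rewrite hP hQ /=.
  case: q => q1 q2 /=; rewrite xpair_eqE !ord_eqE.
  by case: eqP => ?; case: eqP => ?; case: eqP => ?; case: eqP => ?; lia.
Qed.
End S.

Lemma memb3 (a b1 b2 x1 x2 : nat) :
  (((x1 == a) && (x2 == a.+1)) || ((x1 == b1) && (x2 == b2))) <-> mem3 a b1 b2 x1 x2.
Proof.
rewrite /mem3; split; first by case/orP => /andP [/eqP -> /eqP ->]; auto.
by case=> [[-> ->]|[-> ->]]; rewrite !eqxx ?orbT.
Qed.

Lemma le3 n k : k <= 3 -> 5 <= n -> k <= n - 2.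
Proof. lia. Qed.

Lemma pair_nat_eq m (u v : 'I_m * 'I_m) : u.1 = v.1 :> nat -> u.2 = v.2 :> nat -> u = v.
Proof. by case: u v => [u1 u2] [v1 v2] /= e1 e2; congr pair; apply: val_inj. Qed.

Section T.
Variable n : nat.
Hypothesis hn : 4 <= n.

Lemma shapeS (x : 'S_n) : reach 2 1 x -> x != 1%g ->
  exists a b1 b2, [/\ a.+1 < n, b2 < n, shape a b1 b2 &
   forall q : 'I_n * 'I_n, q \in Iv x <-> mem3 a b1 b2 q.1 q.2].
Proof.
move=> r x1; have [a [b1 [b2 [h1 h2 h3 h4]]]] := reach2_shape r x1.
by exists a, b1, b2; split => // q; rewrite h4 memb3.
Qed.

Lemma card2S (x : 'S_n) : reach 2 1 x -> x != 1%g -> #|Iv x| = 2.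
Proof.
move=> r x1; have := reach_dist r; have := reach_par r.
have -> : Dset 1 x = Iv x.
  by apply/setP => q; rewrite /Dset in_set Iv1 in_set0; case: (q \in Iv x).
rewrite Iv1 cards0 /=.
have : Iv x != set0.
  apply/negP => /eqP e; have ex : x = 1%g by apply: Iv_inj; rewrite e Iv1.
  by rewrite ex eqxx in x1.
rewrite -card_gt0; case: #|Iv x| => [|[|[|k]]] //.
Qed.


Lemma inter2 (x y : 'S_n) : reach 2 1 x -> x != 1%g -> reach 2 1 y -> y != 1%g ->
  (exists2 k, k <= 3 & reach k x y) -> exists t, (t \in Iv x) && (t \in Iv y).
Proof.
move=> rx x1 ry y1 [k hk rxy].
case: (set_0Vmem (Iv x :&: Iv y)) => [e|[t]]; last by rewrite inE => h; exists t.
have := reach_dist rxy.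
have -> : Dset x y = Iv x :|: Iv y.
  apply/setP => q; rewrite /Dset in_set in_setU.
  have : q \in Iv x :&: Iv y = false by rewrite e in_set0.
  by rewrite in_setI; case: (q \in Iv x); case: (q \in Iv y).
have := cardsUI (Iv x) (Iv y); rewrite e cards0 (card2S rx x1) (card2S ry y1).
lia.
Qed.

Lemma class_bound (C : {set 'S_n}) :
  (forall x y, x \in C -> y \in C -> kendall_le x y 3) ->
  (forall x y, x \in C -> y \in C -> odd #|Iv x| = odd #|Iv y|) ->
  #|C| <= n.-1.
Proof.
move=> hC hpar.
case: (set_0Vmem C) => [->|[c cC]]; first by rewrite cards0.
pose C' := [set (x * c^-1)%g | x in C].
have cC' : #|C'| = #|C| by rewrite card_imset //; apply: mulIg.
have oneC : (1%g : 'S_n) \in C' by apply/imsetP; exists c => //; rewrite mulgV.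
have dist3 : forall x y, x \in C' -> y \in C' -> exists2 k, k <= 3 & reach k x y.
  move=> x y /imsetP [x0 x0C ->] /imsetP [y0 y0C ->].
  have /kendallP [k hk r] := hC _ _ x0C y0C.
  by exists k => //; apply: reach_mulr.
have r2 : forall x, x \in C' -> x != 1%g -> reach 2 1 x.
  move=> x /imsetP [x0 x0C ex] x1.
  have /kendallP [k hk r] := hC _ _ cC x0C.
  have := reach_par r; rewrite (hpar _ _ x0C cC).
  have rr := reach_mulr (c^-1)%g r; rewrite mulgV -ex in rr.
  move: k hk r rr => [|[|[|[|k]]]] // _ _ rr.
  - by move: rr => /= /eqP e; rewrite e eqxx in x1.
  - by case: (odd _).
  - by case: (odd _).
pose S := C' :\ 1%g.
pose K := [set Iv x | x in S].
have cS : #|C'| = #|S|.+1 by rewrite (cardsD1 1%g C') oneC.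
have cK : #|K| = #|S|.
  rewrite card_in_imset //; move=> x y _ _; exact: Iv_inj.
have inS : forall x, x \in S -> x \in C' /\ x != 1%g.
  by move=> x; rewrite !inE => /andP [h1 h2].
have Kin : forall J, J \in K -> exists2 x, x \in S & J = Iv x.
  by move=> J /imsetP [x xS ->]; exists x.
have c2 : forall J, J \in K -> #|J| = 2.
  move=> J /Kin [x /inS [xC x1] ->]; exact: card2S (r2 _ xC x1) x1.
have int : forall J1 J2, J1 \in K -> J2 \in K -> exists t, (t \in J1) && (t \in J2).
  move=> J1 J2 /Kin [x /inS [xC x1] ->] /Kin [y /inS [yC y1] ->].
  exact: inter2 (r2 _ xC x1) x1 (r2 _ yC y1) y1 (dist3 _ _ xC yC).
have shK : forall J, J \in K -> exists a b1 b2, [/\ a.+1 < n, b2 < n, shape a b1 b2 &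
   forall q : 'I_n * 'I_n, q \in J <-> mem3 a b1 b2 q.1 q.2].
  move=> J /Kin [x /inS [xC x1] ->]; exact: shapeS (r2 _ xC x1) x1.
have n0 : 0 < n by lia.
have bK : #|K| <= n - 2.
  pose p0 : 'I_n * 'I_n := (Ordinal n0, Ordinal n0).
  case: (tri p0 c2 int) => [[p hp]|[cK3 [J1 [J2 [J3 [J1K J2K J3K nc]]]]]]; last first.
    have [x /andP [x1 x2]] := int _ _ J1K J2K.
    have x3 := nc _ x1 x2.
    have [y /andP [y1 y3]] := int _ _ J1K J3K.
    have y2 : y \notin J2 by apply/negP => y2; move: (nc _ y1 y2); rewrite y3.
    have [z /andP [z2 z3]] := int _ _ J2K J3K.
    have z1 : z \notin J1 by apply/negP => z1; move: (nc _ z1 z2); rewrite z3.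
    have [a [b1 [b2 [ha hb sh m1]]]] := shK _ J1K.
    have [a' [b1' [b2' [ha' hb' sh' m2]]]] := shK _ J2K.
    have [a'' [b1'' [b2'' [ha'' hb'' sh'' m3]]]] := shK _ J3K.
    have h5 : 5 <= n.
      apply: (tri_nat sh ha hb sh' ha' hb' sh'' ha'' hb'' (x1 := x.1) (x2 := x.2)
        (y1 := y.1) (y2 := y.2) (z1 := z.1) (z2 := z.2)).
      - exact: (proj1 (m1 x) x1).
      - exact: (proj1 (m2 x) x2).
      - by move=> /(proj2 (m3 x)); rewrite (negbTE x3).
      - exact: (proj1 (m1 y) y1).
      - exact: (proj1 (m3 y) y3).
      - by move=> /(proj2 (m2 y)); rewrite (negbTE y2).
      - exact: (proj1 (m2 z) z2).
      - exact: (proj1 (m3 z) z3).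
      - by move=> /(proj2 (m1 z)); rewrite (negbTE z1).
    exact: le3 cK3 h5.
  pose e := if p.2 == (p.1).+1 :> nat then nat_of_ord p.1 else (if p.1 == 0 :> nat then 2 else 0).
  pose oth J := odflt p [pick q in J :\ p].
  have othP : forall J, J \in K -> oth J \in J /\ oth J != p.
    move=> J JK; rewrite /oth; case: pickP => [q|h] /=.
      by rewrite !inE => /andP [? ?].
    have := c2 _ JK; rewrite (cardsD1 p J) hp // eq_card0 //.
  have ofacts : forall J, J \in K -> exists a b1 b2, [/\ a.+1 < n, b2 < n, shape a b1 b2 & [/\
     mem3 a b1 b2 p.1 p.2, mem3 a b1 b2 (oth J).1 (oth J).2 &
     ~ ((oth J).1 = p.1 :> nat /\ (oth J).2 = p.2 :> nat)]].
    move=> J JK; have [a [b1 [b2 [ha hb sh m]]]] := shK _ JK.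
    have [o1 o2] := othP _ JK.
    exists a, b1, b2; split => //; split.
    - by apply/m; apply: hp.
    - by apply/m.
    - by move=> [e1 e2]; move/eqP: o2; apply; apply: pair_nat_eq.
  pose FF J := F p.1 (oth J).1 (oth J).2.
  have Fb : forall J, J \in K -> FF J < n.-1 /\ FF J <> e.
    move=> J /ofacts [a [b1 [b2 [ha hb sh [mp mq nq]]]]]; rewrite /FF /e.
    case: eqP => hE.
      exact: (star_E hE sh ha hb mp mq nq).
    exact: (star_N hn hE sh ha hb mp mq nq).
  have Finj : {in K &, injective FF}.
    move=> J1 J2 /[dup] J1K /ofacts [a [b1 [b2 [ha hb sh [mp mq nq]]]]]
      /[dup] J2K /ofacts [a' [b1' [b2' [ha' hb' sh' [mp' mq' nq']]]]] eF.
    have [q1 q2] : (oth J1).1 = (oth J2).1 :> nat /\ (oth J1).2 = (oth J2).2 :> nat.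
      case: (eqVneq (p.2 : nat) (p.1).+1) => [hE|/eqP hE].
        exact: (star_E_inj hE sh ha hb mp mq nq sh' ha' hb' mp' mq' nq' eF).
      exact: (star_N_inj hE sh ha hb mp mq nq sh' ha' hb' mp' mq' nq' eF).
    have eo : oth J1 = oth J2 by apply: pair_nat_eq.
    have [o1 o1'] := othP _ J1K; have [o2 o2'] := othP _ J2K.
    rewrite (two2 (c2 _ J1K) (hp _ J1K) o1) 1?eq_sym //.
    by rewrite (two2 (c2 _ J2K) (hp _ J2K) o2) 1?eq_sym // eo.
  have eb : e < n.-1 by rewrite /e; case: eqP => [he|]; [have := ltn_ord p.2; lia | case: eqP; lia].
  pose h J : 'I_n := insubd p.1 (FF J).
  have hv : forall J, J \in K -> nat_of_ord (h J) = FF J.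
    move=> J JK; have [h1 _] := Fb _ JK; rewrite /h insubdK // ?inE /=; lia.
  pose ke : 'I_n := insubd p.1 e.
  have kev : nat_of_ord ke = e by rewrite /ke insubdK // ?inE /=; lia.
  rewrite -(card_in_imset (f := h)); last first.
    by move=> J1 J2 J1K J2K /(congr1 val) /=; rewrite !hv //; apply: Finj.
  apply: (leq_trans (subset_leq_card (_ : _ \subset [set k : 'I_n | k < n.-1] :\ ke))).
    apply/subsetP => k /imsetP [J JK ->]; rewrite !inE -val_eqE /= hv // kev.
    have [h1 h2] := Fb _ JK; apply/andP; split; [by apply/eqP | by []].
  have := cardsD1 ke [set k : 'I_n | k < n.-1]; rewrite card_lt; last by lia.
  rewrite inE kev eb; lia.
rewrite -cC' cS -cK; lia.
Qed.
End T.

Lemma anticode_bound n (hn : 4 <= n) (B : {set 'S_n}) : anticode B 3 -> #|B| <= 2 * (n - 1).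
Proof.
move=> hB.
pose B0 := [set x in B | ~~ odd #|Iv x|]; pose B1 := [set x in B | odd #|Iv x|].
have sub : B \subset B0 :|: B1.
  by apply/subsetP => x xB; rewrite !inE xB /=; case: (odd _).
have b0 : #|B0| <= n.-1.
  apply: class_bound => // [x y|x y]; rewrite !inE => /andP [xB hx] /andP [yB hy].
    exact: hB.
  by move: hx hy; case: (odd _); case: (odd _).
have b1 : #|B1| <= n.-1.
  apply: class_bound => // [x y|x y]; rewrite !inE => /andP [xB hx] /andP [yB hy].
    exact: hB.
  by move: hx hy; case: (odd _); case: (odd _).
have := subset_leq_card sub; have := cardsUI B0 B1; lia.
Qed.

Lemma Iv_adj n (i j : 'I_n) : nat_of_ord j = (nat_of_ord i).+1 ->
  forall q, (q \in Iv (tperm i j)) = (q == (i, j)).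
Proof.
move=> hj q; rewrite -[tperm i j]mulg1 (Iv_step _ hj) Iv1 inE /= !perm1.
by rewrite /srt hj ltnSn.
Qed.

Section L.
Variable m : nat.
Hypothesis hm : 3 <= m.
Variables i1 i2 : 'I_m.+1.
Hypothesis h1 : nat_of_ord i1 = 0.
Hypothesis h2 : nat_of_ord i2 = 1.

Definition adj (k : nat) : 'S_m.+1 := tperm (inord k) (inord k.+1).

Lemma adj_step1 (k : 'I_m) : adj_step 1 (adj k).
Proof.
apply/existsP; exists (inord k); apply/existsP; exists (inord k.+1).
rewrite mulg1 eqxx andbT; apply/eqP; have hk := ltn_ord k; rewrite !inordK; lia.
Qed.

Lemma adj0 : adj 0 = tperm i1 i2.
Proof.
have e1 : inord 0 = i1 by apply: val_inj; rewrite /= inordK // h1.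
have e2 : inord 1 = i2 by apply: val_inj; rewrite /= inordK ?h2 //; lia.
by rewrite /adj e1 e2.
Qed.

Lemma adj_inj : injective (fun k : 'I_m => adj k).
Proof.
move=> k k' e.
have hk := ltn_ord k; have hk' := ltn_ord k'.
have : (inord k, inord k.+1) \in Iv (adj k').
  rewrite -e /adj Iv_adj ?eqxx // !inordK //; lia.
rewrite /adj Iv_adj; last by rewrite !inordK //; lia.
rewrite xpair_eqE => /andP [/eqP e1 _]; apply: val_inj.
by move: (congr1 val e1); rewrite /= !inordK //; lia.
Qed.

Lemma cardA : 2 * m <= #|kball m.+1 1 :|: [set (s * tperm i1 i2)%g | s in kball m.+1 1]|.
Proof.
pose tau := tperm i1 i2.
pose f1 := fun k : 'I_m => adj k.
pose f2 := fun k : 'I_m => (adj k * tau)%g.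
have f1b : forall k, f1 k \in kball m.+1 1.
  by move=> k; rewrite inE; apply/kendallP; exists 1 => //; apply: reach1; apply: adj_step1.
have sub : f1 @: 'I_m :|: f2 @: 'I_m \subset kball m.+1 1 :|: [set (s * tau)%g | s in kball m.+1 1].
  apply/subsetP => x; rewrite in_setU => /orP [] /imsetP [k _ ->]; rewrite in_setU.
    by rewrite f1b.
  by apply/orP; right; apply/imsetP; exists (adj k) => //; exact: f1b.
have c1 : #|f1 @: 'I_m| = m by rewrite card_imset ?card_ord //; apply: adj_inj.
have c2 : #|f2 @: 'I_m| = m.
  rewrite card_imset ?card_ord // => k k' /mulIg; exact: adj_inj.
have dis : f1 @: 'I_m :&: f2 @: 'I_m = set0.
  apply/setP => x; rewrite !inE; apply/negP => /andP [/imsetP [k _ ->] /imsetP [k' _ e]].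
  have r1 : reach 1 1 (f1 k) by apply: reach1; apply: adj_step1.
  have r2 : reach 2 1 (f2 k').
    have m0 : 0 < m by lia.
    have ra : reach 1 1 tau.
      by rewrite /tau -adj0; apply: reach1; exact: (adj_step1 (Ordinal m0)).
    have rb : reach 1 tau (f2 k') by rewrite -[tau]mul1g; apply: reach_mulr; apply: reach1; apply: adj_step1.
    exact: (reach_cat ra rb).
  have := reach_par r1; have := reach_par r2; rewrite -e Iv1 cards0 /=.
  by move=> ->.
apply: leq_trans (subset_leq_card sub).
have := cardsUI (f1 @: 'I_m) (f2 @: 'I_m); rewrite dis cards0 c1 c2; lia.
Qed.
End L.

Lemma antiA n (i1 i2 : 'I_n) (h1 : nat_of_ord i1 = 0) (h2 : nat_of_ord i2 = 1) :
  anticode (kball n 1 :|: [set (s * tperm i1 i2)%g | s in kball n 1]) 3.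
Proof.
pose tau := tperm i1 i2.
have rt : reach 1 1 tau.
  apply: reach1; apply/existsP; exists i1; apply/existsP; exists i2.
  by rewrite h1 h2 eqxx mulg1 eqxx.
have anc : forall x, x \in kball n 1 :|: [set (s * tau)%g | s in kball n 1] ->
   exists w, (w = 1%g \/ w = tau) /\ exists2 k, k <= 1 & reach k x w.
  move=> x; rewrite in_setU => /orP [].
    rewrite inE => /kendallP [k hk r]; exists 1%g; split; first by left.
    by exists k => //; apply: reach_sym.
  case/imsetP => s; rewrite inE => /kendallP [k hk r] ->; exists tau; split; first by right.
  exists k => //; apply: reach_sym; have := reach_mulr tau r; by rewrite mul1g.
have btw : forall w w', (w = 1%g \/ w = tau) -> (w' = 1%g \/ w' = tau) ->
    exists2 d, d <= 1 & reach d w w'.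
  move=> w w' [->|->] [->|->].
  - by exists 0 => //=.
  - by exists 1.
  - by exists 1 => //; apply: reach_sym.
  - by exists 0 => //=.
move=> x y xA yA.
have [w [hw [k hk r1]]] := anc _ xA.
have [w' [hw' [k' hk' r2]]] := anc _ yA.
have [d hd r3] := btw _ _ hw hw'.
apply/kendallP; exists (k + (d + k')); first lia.
apply: reach_cat r1 _; apply: reach_cat r3 _; exact: reach_sym.
Qed.

Unset Implicit Arguments.

Theorem theorem7 (n : nat) (hn : 4 <= n) (i1 i2 : 'I_n)
  (h1 : nat_of_ord i1 = 0%N) (h2 : nat_of_ord i2 = 1%N) :
  let A := kball n 1 :|: [set (s * tperm i1 i2)%g | s in kball n 1] in
  optimal_anticode A 3 /\ #|A| = (2 * (n - 1))%N.
Proof.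
move=> A.
have anti : anticode A 3 by apply: antiA.
have up : #|A| <= 2 * (n - 1) by apply: anticode_bound.
have lo : 2 * (n - 1) <= #|A|.
  move: i1 i2 h1 h2 @A anti up; case: n hn => [|m] hm // i1 i2 h1 h2 A _ _.
  rewrite subn1 /=; apply: cardA => //; lia.
split; last by apply/eqP; rewrite eqn_leq up lo.
split => // B hB; apply: leq_trans lo; exact: anticode_bound.
Qed.
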